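(* There exist constants $\bar x^e,\bar u^e$, independent of $N$ and $W$, such that $\|x^e_t\|\le\bar x^e$ and $\|u^e_t\|\le\bar u^e$ for all $0\le t\le N-1$. Moreover, the states and controls of FOSS satisfy $\|x_t(0)\|\le\sqrt n\,\bar x^e$ for $0\le t\le N$ and $\|u_t(0)\|\le\sqrt n\,\bar u^e$ for $0\le t\le N-1$.
   Context: Setting: $(A,B)$ in canonical form (indices $0=k_0<k_1<\dots<k_m=n$, $\mathcal I=\{k_1,\dots,k_m\}$; rows $i\notin\mathcal I$ of $A$ equal $e_{i+1}^\top$; $j$-th column of $B$ is $e_{k_j}$; $A(\mathcal I,:)$ = rows of $A$ indexed by $\mathcal I$; $x^{\mathcal I}=(x^{k_1},\dots,x^{k_m})^\top$). Dynamics $x_{t+1}=Ax_t+Bu_t$, $x_0=0$. Standing assumptions: $f_t$ $\mu_f$-strongly convex and $l_f$-smooth, $g_t$ convex and $l_g$-smooth, minimizers $\theta_t$ of $f_t$ and $\xi_t$ of $g_t$ satisfy $\|\theta_t\|\le\bar\theta$, $\|\xi_t\|\le\bar\xi$ for all $t$. Optimal steady state $(x^e_t,u^e_t)=\arg\min\{f_t(x)+g_t(u):x=Ax+Bu\}$. FOSS: controller $u_t(0)=z_{t+1}(0)-A(\mathcal I,:)x_t(0)$ with $z_{t+1}(0)=(x^e_t)^{\mathcal I}$, $x_{t+1}(0)=Ax_t(0)+Bu_t(0)$, $x_0(0)=0$. *)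

(* Defs.v *)
From Stdlib Require Import Reals.
From mathcomp Require Import all_boot.
Set Implicit Arguments. Unset Strict Implicit. Unset Printing Implicit Defensive.
Local Open Scope R_scope.

(* Vectors of R^n and p x q real matrices.  Ordinal i : 'I_n stands for the
   paper's (1-based) coordinate index i+1. *)
Definition vec (n : nat) := 'I_n -> R.
Definition mat (p q : nat) := 'I_p -> 'I_q -> R.

Definition vzero n : vec n := fun _ => 0.
Definition vadd n (x y : vec n) : vec n := fun i => x i + y i.
Definition vsub n (x y : vec n) : vec n := fun i => x i - y i.
Definition vscale n (a : R) (x : vec n) : vec n := fun i => a * x i.
Definition dot n (x y : vec n) : R := \big[Rplus/0]_(i < n) (x i * y i).
Definition norm n (x : vec n) : R := sqrt (dot x x).
Definition mv p q (M : mat p q) (x : vec q) : vec p :=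
  fun i => \big[Rplus/0]_(j < q) (M i j * x j).

(* coordinate of x with paper (1-based) index p *)
Definition coord n (x : vec n) (p : nat) : R :=
  \big[Rplus/0]_(i < n) (if (i.+1 == p)%N then x i else 0).

(* Canonical form of (A,B) with indices 0 = k_0 < k_1 < ... < k_m = n,
   I = {k_1,...,k_m}; rows i notin I of A equal e_{i+1}^T; the j-th column
   of B is e_{k_j} (all indices 1-based as in the paper). *)
Definition in_I (k : nat -> nat) (m : nat) (p : nat) : Prop :=
  exists j, (1 <= j <= m)%N /\ p = k j.

Definition canonical_form n m (k : nat -> nat) (A : mat n n) (B : mat n m) : Prop :=
  k 0%N = 0%N /\ (forall j, (j < m)%N -> (k j < k j.+1)%N) /\ k m = n /\
  (forall i : 'I_n, ~ in_I k m i.+1 ->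
     forall j : 'I_n, A i j = if (j == i.+1 :> nat) then 1 else 0) /\
  (forall (i : 'I_n) (j : 'I_m), B i j = if (i.+1 == k j.+1)%N then 1 else 0).

Definition subI n m (k : nat -> nat) (x : vec n) : vec m :=
  fun j => coord x (k j.+1).

Definition convex n (g : vec n -> R) : Prop :=
  forall (x y : vec n) (a : R), 0 <= a <= 1 ->
    g (vadd (vscale a x) (vscale (1 - a) y)) <= a * g x + (1 - a) * g y.

Definition strongly_convex n (mu : R) (f : vec n -> R) : Prop :=
  forall (x y : vec n) (a : R), 0 <= a <= 1 ->
    f (vadd (vscale a x) (vscale (1 - a) y)) <=
      a * f x + (1 - a) * f y - mu / 2 * a * (1 - a) * (norm (vsub x y)) ^ 2.

Definition is_gradient n (f : vec n -> R) (x v : vec n) : Prop :=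
  forall eps, 0 < eps -> exists delta, 0 < delta /\
    forall h : vec n, norm h < delta ->
      Rabs (f (vadd x h) - f x - dot v h) <= eps * norm h.

Definition smooth n (l : R) (f : vec n -> R) : Prop :=
  exists df : vec n -> vec n, (forall x, is_gradient f x (df x)) /\
    forall x y, norm (vsub (df x) (df y)) <= l * norm (vsub x y).

Definition is_minimizer n (f : vec n -> R) (th : vec n) : Prop :=
  forall x, f th <= f x.

Definition steady_state_opt n m (A : mat n n) (B : mat n m)
    (f : vec n -> R) (g : vec m -> R) (xe : vec n) (ue : vec m) : Prop :=
  xe = vadd (mv A xe) (mv B ue) /\
  forall (x : vec n) (u : vec m), x = vadd (mv A x) (mv B u) ->
    f xe + g ue <= f x + g u.

(* FOSS: u_t(0) = z_{t+1}(0) - A(I,:) x_t(0), z_{t+1}(0) = (x^e_t)^I,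
   x_{t+1}(0) = A x_t(0) + B u_t(0), x_0(0) = 0.
   Note (A(I,:) x) = (A x)^I. *)
Definition foss_u n m (k : nat -> nat) (A : mat n n) (xe : nat -> vec n)
    (t : nat) (xt : vec n) : vec m :=
  vsub (@subI n m k (xe t)) (@subI n m k (mv A xt)).

Fixpoint foss_x n m (k : nat -> nat) (A : mat n n) (B : mat n m)
    (xe : nat -> vec n) (t : nat) : vec n :=
  match t with
  | O => @vzero n
  | S t' => let xt := @foss_x n m k A B xe t' in
            vadd (mv A xt) (mv B (@foss_u n m k A xe t' xt))
  end.

Definition foss_uu n m (k : nat -> nat) (A : mat n n) (B : mat n m)
    (xe : nat -> vec n) (t : nat) : vec m :=
  @foss_u n m k A xe t (foss_x k A B xe t).

(* Main.v *)
Require Import Defs.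
From HB Require Import structures.
From Stdlib Require Import Reals Lra Classical FunctionalExtensionality.
From mathcomp Require Import all_boot.
Set Implicit Arguments. Unset Strict Implicit.
Local Open Scope R_scope.

Lemma Rplus_assoc' : associative Rplus.
Proof. move=> x y z; by rewrite Rplus_assoc. Qed.
HB.instance Definition _ := Monoid.isComLaw.Build R 0 Rplus Rplus_assoc' Rplus_comm Rplus_0_l.

Lemma sum_le n (F G : 'I_n -> R) : (forall i, F i <= G i) ->
  \big[Rplus/0]_(i < n) F i <= \big[Rplus/0]_(i < n) G i.
Proof. move=> H; apply: (big_ind2 (fun x y => x <= y)) => //; [lra| move=> *; lra]. Qed.

Lemma sum_ge0 n (F : 'I_n -> R) : (forall i, 0 <= F i) -> 0 <= \big[Rplus/0]_(i < n) F i.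
Proof. move=> H; apply: (big_ind (fun x => 0 <= x)) => //; [lra| move=> *; lra]. Qed.

Lemma sum_abs n (F : 'I_n -> R) : Rabs (\big[Rplus/0]_(i < n) F i) <= \big[Rplus/0]_(i < n) Rabs (F i).
Proof.
apply: (big_ind2 (fun x y => Rabs x <= y)).
- rewrite Rabs_R0; lra.
- move=> x1 x2 y1 y2 H1 H2; apply: Rle_trans (Rabs_triang _ _) _; lra.
- move=> i _; lra.
Qed.

Lemma sum_single n (F : 'I_n -> R) (j0 : 'I_n) : (forall j, j != j0 -> F j = 0) ->
  \big[Rplus/0]_(j < n) F j = F j0.
Proof.
move=> H; rewrite (bigD1 j0) //= big1 ?Rplus_0_r // => j /H //.
Qed.

Lemma sum_zero n (F : 'I_n -> R) : (forall j, F j = 0) -> \big[Rplus/0]_(j < n) F j = 0.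
Proof. by move=> H; rewrite big1. Qed.

Lemma term_le_sum n (F : 'I_n -> R) (j0 : 'I_n) : (forall j, 0 <= F j) ->
  F j0 <= \big[Rplus/0]_(j < n) F j.
Proof.
move=> H; rewrite (bigD1 j0) //=.
rewrite -{1}(Rplus_0_r (F j0)); apply: Rplus_le_compat_l.
apply: (big_ind (fun x => 0 <= x)) => //; [lra| move=> *; lra].
Qed.

Lemma sum_const n (c : R) : \big[Rplus/0]_(i < n) c = INR n * c.
Proof.
elim: n => [|n IH]; first by rewrite big_ord0 /=; ring.
rewrite big_ord_recr /= IH; change (INR n * c + c = INR (S n) * c); rewrite S_INR; ring.
Qed.

Lemma sum_scale n a (F : 'I_n -> R) : \big[Rplus/0]_(i < n) (a * F i) = a * \big[Rplus/0]_(i < n) F i.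
Proof.
symmetry; apply: (big_morph (fun x => a * x)); [move=> *; ring | ring].
Qed.

Lemma dot_ge0 n (x : vec n) : 0 <= dot x x.
Proof. apply: sum_ge0 => i; nra. Qed.

Lemma norm_ge0 n (x : vec n) : 0 <= norm x.
Proof. apply: sqrt_pos. Qed.

Lemma norm_sq n (x : vec n) : norm x * norm x = dot x x.
Proof. apply: sqrt_sqrt; apply: dot_ge0. Qed.

Lemma coord_le_norm n (x : vec n) i : Rabs (x i) <= norm x.
Proof.
rewrite /norm -(sqrt_Rsqr_abs (x i)); apply: sqrt_le_1_alt.
rewrite /Rsqr /dot. apply: (@term_le_sum n (fun i => x i * x i) i) => j; nra.
Qed.

Lemma norm_le_coord n (x : vec n) M : 0 <= M -> (forall i, Rabs (x i) <= M) ->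
  norm x <= sqrt (INR n) * M.
Proof.
move=> HM H; rewrite -(sqrt_pow2 M HM) -sqrt_mult; [|apply: pos_INR| nra].
apply: sqrt_le_1_alt; rewrite -sum_const; apply: sum_le => i.
have h := H i; have h1 := Rle_abs (x i); have h2 := Rle_abs (- x i).
rewrite Rabs_Ropp in h2; nra.
Qed.

Lemma norm_ext n (x y : vec n) : (forall i, x i * x i = y i * y i) -> norm x = norm y.
Proof. move=> H; rewrite /norm /dot; congr sqrt; apply: eq_bigr => i _; apply: H. Qed.

Lemma norm_scale n a (x : vec n) : norm (vscale a x) = Rabs a * norm x.
Proof.
rewrite /norm /dot /vscale.
rewrite (eq_bigr (fun i => (a * a) * (x i * x i))); last by move=> i _; ring.
rewrite sum_scale sqrt_mult; [|nra|apply: dot_ge0].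
by rewrite -Rsqr_def sqrt_Rsqr_abs.
Qed.

Lemma dot_scale_r n a (v x : vec n) : dot v (vscale a x) = a * dot v x.
Proof.
rewrite /dot /vscale -sum_scale; apply: eq_bigr => i _; ring.
Qed.

Lemma grad_dir n (f : vec n -> R) x v h eps : is_gradient f x v -> 0 < eps ->
  exists a, 0 < a <= 1 /\
    Rabs (f (vadd x (vscale a h)) - f x - a * dot v h) <= eps * a * norm h.
Proof.
move=> H he; have [d [dpos Hd]] := H eps he.
have N0 := norm_ge0 h.
set q := d / (2 * (norm h + 1)).
have qpos : 0 < q by rewrite /q; apply: Rdiv_lt_0_compat; lra.
have qe : q * (2 * (norm h + 1)) = d by rewrite /q; field; lra.
exists (Rmin 1 q); have m1 := Rmin_l 1 q; have m2 := Rmin_r 1 q.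
have mp : 0 < Rmin 1 q by apply: Rmin_pos; lra.
split; first lra.
have nl : norm (vscale (Rmin 1 q) h) < d.
  rewrite norm_scale Rabs_right; last lra.
  nra.
have := Hd _ nl; rewrite dot_scale_r norm_scale (Rabs_right _ (Rle_ge _ _ (Rlt_le _ _ mp))).
move=> hh; rewrite Rmult_assoc; exact: hh.
Qed.

Lemma grad_zero n (f : vec n -> R) th v : is_minimizer f th -> is_gradient f th v ->
  forall i, v i = 0.
Proof.
move=> Hm Hg.
have D0 : dot v v <= 0.
  apply: Rnot_lt_le => Dp.
  have sp : 0 < sqrt (dot v v) by apply: sqrt_lt_R0.
  have ss := norm_sq v; rewrite /norm in ss.
  have [a [ha Ha]] := @grad_dir _ _ _ _ (vscale (-1) v) _ Hg (Rlt_mult_inv_pos _ 2 sp Rlt_0_2).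
  move: Ha; rewrite dot_scale_r norm_scale Rabs_Ropp Rabs_R1 Rmult_1_l.
  have := Hm (vadd th (vscale a (vscale (-1) v))).
  set F := f (vadd _ _) => hF hA.
  have := Rle_abs (F - f th - a * (-1 * dot v v)).
  have E : sqrt (dot v v) * / 2 * a * sqrt (dot v v) = a * dot v v / 2.
    rewrite -[in RHS]ss; field.
  rewrite /norm E in hA; move=> hb.
  have : 0 < a * dot v v by nra.
  lra.
move=> i.
have h : v i * v i <= dot v v by rewrite /dot; apply: (@term_le_sum n (fun i => v i * v i) i) => j; nra.
nra.
Qed.

Lemma convex_grad n (f : vec n -> R) x v y : convex f -> is_gradient f x v ->
  dot v (vsub y x) <= f y - f x.
Proof.
move=> Hc Hg; apply: Rnot_lt_le => Hlt.
set h := vsub y x.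
have N0 := norm_ge0 h.
set gap := dot v h - (f y - f x).
have gp : 0 < gap by rewrite /gap /h; lra.
have ep : 0 < gap / (norm h + 1) by apply: Rdiv_lt_0_compat; lra.
have ee : gap / (norm h + 1) * (norm h + 1) = gap by field; lra.
have [a [ha Ha]] := @grad_dir _ _ _ _ h _ Hg ep.
have pe : vadd x (vscale a h) = vadd (vscale a y) (vscale (1 - a) x).
  apply: functional_extensionality => i; rewrite /vadd /vscale /h /vsub; ring.
have := Hc y x a ltac:(lra); rewrite -pe => hc.
have := Rle_abs (- (f (vadd x (vscale a h)) - f x - a * dot v h)); rewrite Rabs_Ropp.
move: Ha; set e := gap / (norm h + 1); set F := f _ => Ha hab.
have : a * (f y - f x) >= a * dot v h - e * a * norm h by rewrite -/F in hc; nra.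
move=> hh.
have : f y - f x >= dot v h - e * norm h.
  apply: Rnot_lt_ge => c; nra.
rewrite -/e in ee ep. have : e * norm h < gap by nra.
rewrite /gap; lra.
Qed.

Lemma descent n (f : vec n -> R) l th x : smooth l f -> convex f -> is_minimizer f th ->
  f x - f th <= INR n * Rabs l * (norm (vsub x th) * norm (vsub x th)).
Proof.
move=> [df [Hg Hl]] Hc Hm.
have z := grad_zero Hm (Hg th).
have cg := convex_grad th Hc (Hg x).
have e1 : norm (df x) = norm (vsub (df x) (df th)).
  apply: norm_ext => i; rewrite /vsub z; ring.
have e2 : norm (vsub th x) = norm (vsub x th) by apply: norm_ext => i; rewrite /vsub; ring.
have hd : Rabs (dot (df x) (vsub th x)) <= INR n * (norm (df x) * norm (vsub th x)).
  rewrite -sum_const; apply: Rle_trans (sum_abs _) _; apply: sum_le => i.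
  rewrite Rabs_mult; apply: Rmult_le_compat; try apply: Rabs_pos; apply: coord_le_norm.
have := Hl x th; rewrite -e1 => hl.
have := Rle_abs (- dot (df x) (vsub th x)); rewrite Rabs_Ropp e2 in hd * => ha.
have nn := norm_ge0 (df x); have np := norm_ge0 (vsub x th); have ip := pos_INR n.
have : l * norm (vsub x th) <= Rabs l * norm (vsub x th).
  apply: Rmult_le_compat_r => //; apply: Rle_abs.
move=> hl2.
have : INR n * (norm (df x) * norm (vsub x th)) <= INR n * Rabs l * (norm (vsub x th) * norm (vsub x th)).
  rewrite Rmult_assoc; apply: Rmult_le_compat_l => //; nra.
lra.
Qed.

Lemma sconvex_lb n mu (f : vec n -> R) th x : 0 < mu -> strongly_convex mu f -> is_minimizer f th ->
  mu / 4 * (norm (vsub x th) * norm (vsub x th)) <= f x - f th.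
Proof.
move=> mp Hs Hm.
have := Hs x th (/2) ltac:(lra).
have := Hm (vadd (vscale (/ 2) x) (vscale (1 - / 2) th)).
move=> h1 h2. simpl in h2. nra.
Qed.

Lemma sconvex_convex n mu (f : vec n -> R) : 0 < mu -> strongly_convex mu f -> convex f.
Proof.
move=> mp Hs x y a ha; have := Hs x y a ha.
have : 0 <= mu / 2 * a * (1 - a) * norm (vsub x y) ^ 2.
  have := norm_ge0 (vsub x y); move=> *.
  apply: Rmult_le_pos; [|apply: pow_le; lra]; apply: Rmult_le_pos; [|lra]; apply: Rmult_le_pos; lra.
lra.
Qed.

Lemma k_lt (m : nat) (k : nat -> nat) : (forall j, (j < m)%N -> (k j < k j.+1)%N) ->
  forall j1 j2, (j1 < j2)%N -> (j2 <= m)%N -> (k j1 < k j2)%N.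
Proof.
move=> Hk j1; elim=> [//|j2 IH] h1 h2.
have := Hk j2 h2; rewrite leq_eqVlt in h1; case/orP: h1 => [/eqP [->] //|h1].
move=> h; apply: ltn_trans (IH h1 (ltnW h2)) h.
Qed.

Lemma k_inj (m : nat) (k : nat -> nat) : (forall j, (j < m)%N -> (k j < k j.+1)%N) ->
  forall j1 j2, (j1 <= m)%N -> (j2 <= m)%N -> k j1 = k j2 -> j1 = j2.
Proof.
move=> Hk j1 j2 h1 h2 e.
case: (ltngtP j1 j2) => // c.
- by have := k_lt Hk c h2; rewrite e ltnn.
- by have := k_lt Hk c h1; rewrite e ltnn.
Qed.

Lemma coord_succ n (x : vec n) (i : 'I_n) : coord x i.+1 = x i.
Proof.
rewrite /coord (@sum_single _ (fun j : 'I_n => if (j.+1 == i.+1)%N then x j else 0) i).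
  by rewrite eqxx.
by move=> j hj; rewrite eqSS; case: eqP => // e; move: hj; rewrite (ord_inj e) eqxx.
Qed.

Lemma exists_row n m k (A : mat n n) (B : mat n m) : canonical_form k A B ->
  forall j : 'I_m, exists i : 'I_n, (i.+1 = k j.+1)%N.
Proof.
move=> [Hk0 [Hk [Hkm _]]] j.
have h1 : (0 < k j.+1)%N by rewrite -{1}Hk0; exact: (k_lt Hk (ltn0Sn j) (ltn_ord j)).
have h2 : (k j.+1 <= n)%N.
  rewrite -Hkm; have := ltn_ord j; rewrite leq_eqVlt; case/orP => [/eqP -> //|c].
  by apply: ltnW; exact: (k_lt Hk c (leqnn m)).
have h3 : ((k j.+1).-1 < n)%N by case: (k j.+1) h1 h2.
exists (Ordinal h3) => /=; by case: (k j.+1) h1.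
Qed.

Lemma mvB_in n m k (A : mat n n) (B : mat n m) (u : vec m) (i : 'I_n) (j : 'I_m) :
  canonical_form k A B -> (i.+1 = k j.+1)%N -> mv B u i = u j.
Proof.
move=> [Hk0 [Hk [Hkm [HA HB]]]] e.
rewrite /mv (@sum_single _ (fun j0 => B i j0 * u j0) j).
  by rewrite HB e eqxx; ring.
move=> j0 hj; rewrite HB; case: eqP => [e2|_]; last ring.
have : j0.+1 = j.+1 by apply: (k_inj Hk); [apply: ltn_ord|apply: ltn_ord|rewrite -e2 e].
by move=> [] /ord_inj h; rewrite h eqxx in hj.
Qed.

Lemma mvB_out n m k (A : mat n n) (B : mat n m) (u : vec m) (i : 'I_n) :
  canonical_form k A B -> ~ in_I k m i.+1 -> mv B u i = 0.
Proof.
move=> [Hk0 [Hk [Hkm [HA HB]]]] hn.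
rewrite /mv sum_zero // => j; rewrite HB; case: eqP => [e|_]; last ring.
exfalso; apply: hn; exists j.+1; split => //; apply/andP; split => //; apply: ltn_ord.
Qed.

Lemma mvA_out n m k (A : mat n n) (B : mat n m) (x : vec n) (i : 'I_n) M :
  canonical_form k A B -> ~ in_I k m i.+1 -> 0 <= M -> (forall j, Rabs (x j) <= M) ->
  Rabs (mv A x i) <= M.
Proof.
move=> [Hk0 [Hk [Hkm [HA HB]]]] hn HM Hx.
case: (ltnP i.+1 n) => c.
- rewrite /mv (@sum_single _ (fun j => A i j * x j) (Ordinal c)).
    by rewrite HA //= eqxx Rmult_1_l.
  move=> j hj; rewrite HA //; case: eqP => [e|_]; last ring.
  by move: hj; rewrite (@ord_inj _ j (Ordinal c)) ?eqxx.
- rewrite /mv sum_zero ?Rabs_R0 // => j; rewrite HA //; case: eqP => [e|_]; last ring.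
  by have := ltn_ord j; rewrite e ltnNge c.
Qed.

Definition asum n (A : mat n n) : R := \big[Rplus/0]_(i < n) \big[Rplus/0]_(j < n) Rabs (A i j).

Lemma asum_ge0 n (A : mat n n) : 0 <= asum A.
Proof. apply: sum_ge0 => i; apply: sum_ge0 => j; apply: Rabs_pos. Qed.

Lemma mvA_bound n (A : mat n n) (x : vec n) (i : 'I_n) M :
  0 <= M -> (forall j, Rabs (x j) <= M) -> Rabs (mv A x i) <= asum A * M.
Proof.
move=> HM Hx; rewrite /mv; apply: Rle_trans (sum_abs _) _.
apply: (@Rle_trans _ (\big[Rplus/0]_(j < n) Rabs (A i j) * M)).
  rewrite Rmult_comm -sum_scale; apply: sum_le => j; rewrite Rabs_mult.
  have := Hx j; have := Rabs_pos (A i j); have := Rabs_pos (x j); nra.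
apply: Rmult_le_compat_r => //.
apply: (@term_le_sum n (fun i => \big[Rplus/0]_(j < n) Rabs (A i j)) i) => i0.
apply: sum_ge0 => j; apply: Rabs_pos.
Qed.

Lemma foss_coord n m k (A : mat n n) (B : mat n m) X N (xe : nat -> vec n) :
  canonical_form k A B -> 0 <= X -> (forall s, (s < N)%N -> norm (xe s) <= X) ->
  forall t, (t <= N)%N -> forall i, Rabs (foss_x k A B xe t i) <= X.
Proof.
move=> Hcf HX Hxe; elim=> [|t IH] ht i.
  by rewrite /= /vzero Rabs_R0.
have IH' := IH (ltnW ht).
rewrite /= /vadd.
case: (classic (in_I k m i.+1)) => [[j [/andP [j1 j2] ej]]|hn].
- case: j j1 j2 ej => [//|j] _ j2 ej.
  rewrite (@mvB_in n m k A B _ i (Ordinal j2) Hcf ej) /foss_u /vsub /subI /= -ej coord_succ coord_succ.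
  have := coord_le_norm (xe t) i; have := Hxe t ht.
  have -> : mv A (foss_x k A B xe t) i + (xe t i - mv A (foss_x k A B xe t) i) = xe t i by ring.
  lra.
- rewrite (mvB_out _ Hcf hn) Rplus_0_r; exact: (mvA_out Hcf hn HX IH').
Qed.

Theorem lemma4 (n m : nat) (k : nat -> nat) (A : mat n n) (B : mat n m)
    (mu_f l_f l_g thbar xibar : R) :
  canonical_form k A B -> 0 < mu_f ->
  exists xebar uebar : R,
    forall (N : nat) (f : nat -> vec n -> R) (g : nat -> vec m -> R)
           (theta : nat -> vec n) (xi : nat -> vec m)
           (xe : nat -> vec n) (ue : nat -> vec m),
      (forall t, strongly_convex mu_f (f t) /\ smooth l_f (f t)) ->
      (forall t, convex (g t) /\ smooth l_g (g t)) ->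
      (forall t, is_minimizer (f t) (theta t) /\ norm (theta t) <= thbar) ->
      (forall t, is_minimizer (g t) (xi t) /\ norm (xi t) <= xibar) ->
      (forall t, steady_state_opt A B (f t) (g t) (xe t) (ue t)) ->
      (forall t, (t < N)%N -> norm (xe t) <= xebar /\ norm (ue t) <= uebar) /\
      (forall t, (t <= N)%N -> norm (foss_x k A B xe t) <= sqrt (INR n) * xebar) /\
      (forall t, (t < N)%N -> norm (foss_uu k A B xe t) <= sqrt (INR n) * uebar).
Proof.
move=> Hcf Hmu.
set C := INR n * Rabs l_f * (thbar * thbar) + INR m * Rabs l_g * (xibar * xibar).
set Mx := Rabs thbar + sqrt (4 * C / mu_f).
set xeb := sqrt (INR n) * Mx.
set a := asum A.
exists xeb, (sqrt (INR m) * ((1 + a) * xeb)).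
move=> N f g theta xi xe ue Hf Hg Hth Hxi Hss.
have Mx0 : 0 <= Mx by rewrite /Mx; have := Rabs_pos thbar; have := sqrt_pos (4 * C / mu_f); lra.
have xeb0 : 0 <= xeb by rewrite /xeb; apply: Rmult_le_pos => //; apply: sqrt_pos.
have a0 : 0 <= a by apply: asum_ge0.
have Hxe : forall t, norm (xe t) <= xeb.
  move=> t.
  have [Heq Hopt] := Hss t; have [Hsc Hsm] := Hf t; have [Hgc Hgs] := Hg t.
  have [Hthm Hthb] := Hth t; have [Hxim Hxib] := Hxi t.
  have feas : @vzero n = vadd (mv A (@vzero n)) (mv B (@vzero m)).
    apply: functional_extensionality => i; rewrite /vadd /mv /vzero !sum_zero; [ring| move=> j; ring | move=> j; ring].
  have hopt := Hopt _ _ feas.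
  have hg := Hxim (ue t).
  have d1 := descent (@vzero n) Hsm (sconvex_convex Hmu Hsc) Hthm.
  have d2 := descent (@vzero m) Hgs Hgc Hxim.
  have lb := sconvex_lb (xe t) Hmu Hsc Hthm.
  have e1 : norm (vsub (@vzero n) (theta t)) = norm (theta t).
    by apply: norm_ext => i; rewrite /vsub /vzero; ring.
  have e2 : norm (vsub (@vzero m) (xi t)) = norm (xi t).
    by apply: norm_ext => i; rewrite /vsub /vzero; ring.
  rewrite e1 in d1; rewrite e2 in d2.
  have n1 := norm_ge0 (theta t); have n2 := norm_ge0 (xi t).
  have b1 : INR n * Rabs l_f * (norm (theta t) * norm (theta t)) <= INR n * Rabs l_f * (thbar * thbar).
    apply: Rmult_le_compat_l; [apply: Rmult_le_pos; [apply: pos_INR|apply: Rabs_pos]|nra].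
  have b2 : INR m * Rabs l_g * (norm (xi t) * norm (xi t)) <= INR m * Rabs l_g * (xibar * xibar).
    apply: Rmult_le_compat_l; [apply: Rmult_le_pos; [apply: pos_INR|apply: Rabs_pos]|nra].
  set D := norm (vsub (xe t) (theta t)) in lb.
  have D0 : 0 <= D by apply: norm_ge0.
  have hD : D * D <= 4 * C / mu_f.
    have : mu_f / 4 * (D * D) <= C by rewrite /C; lra.
    move=> h; apply: (Rmult_le_reg_l (mu_f / 4)); [lra|].
    have -> : mu_f / 4 * (4 * C / mu_f) = C by field; lra.
    exact: h.
  have hD2 : D <= sqrt (4 * C / mu_f).
    rewrite -(sqrt_square D D0); apply: sqrt_le_1_alt => //.
  apply: norm_le_coord => // i.
  have := coord_le_norm (vsub (xe t) (theta t)) i; rewrite -/D /vsub => h1.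
  have := coord_le_norm (theta t) i => h2.
  have := Rle_abs thbar.
  have := Rabs_triang (xe t i - theta t i) (theta t i).
  have -> : xe t i - theta t i + theta t i = xe t i by ring.
  rewrite /Mx; lra.
have Hco : forall (t : nat) (i : 'I_n), Rabs (xe t i) <= xeb.
  move=> t i; apply: Rle_trans (coord_le_norm _ i) (Hxe t).
have Hfx := foss_coord Hcf xeb0 (N := N) (xe := xe) (fun s _ => Hxe s).
have uform : forall t (j : 'I_m) (x : vec n), (forall i, Rabs (x i) <= xeb) ->
    Rabs (@foss_u n m k A xe t x j) <= (1 + a) * xeb.
  move=> t j x Hx.
  have [i ei] := exists_row Hcf j.
  rewrite /foss_u /vsub /subI -ei !coord_succ.
  have := mvA_bound A i xeb0 Hx; have := Hco t i.
  have := Rabs_triang (xe t i) (- mv A x i); rewrite Rabs_Ropp; rewrite -/a.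
  rewrite /Rminus; move=> *; lra.
have ub0 : 0 <= (1 + a) * xeb by nra.
split; [|split].
- move=> t _; split; first exact: Hxe.
  apply: norm_le_coord => // j.
  have [i ei] := exists_row Hcf j.
  have := congr1 (fun v => v i) (proj1 (Hss t)); rewrite /vadd (mvB_in _ Hcf ei) => e.
  have -> : ue t j = xe t i - mv A (xe t) i by rewrite {1}e; ring.
  have := mvA_bound A i xeb0 (Hco t); have := Hco t i.
  have := Rabs_triang (xe t i) (- mv A (xe t) i); rewrite Rabs_Ropp -/a.
  rewrite /Rminus; move=> *; lra.
- move=> t ht; apply: norm_le_coord => //; exact: Hfx.
- move=> t ht.
  have hu : norm (foss_uu k A B xe t) <= sqrt (INR m) * ((1 + a) * xeb).
    apply: norm_le_coord => // j; apply: uform; apply: Hfx; exact: ltnW.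
  case: (posnP m) => [m0|mpos].
    have s0 : sqrt (INR m) = 0 by rewrite m0 /= sqrt_0.
    by move: hu; rewrite s0 !Rmult_0_l Rmult_0_r.
  have n1 : (1 <= n)%N.
    move: Hcf => [Hk0 [Hk [Hkm _]]]; rewrite -Hkm -[1%N]/(0.+1) -{1}Hk0.
    exact: (k_lt Hk mpos (leqnn _)).
  have s1 : 1 <= sqrt (INR n).
    rewrite -sqrt_1; apply: sqrt_le_1_alt; apply: (le_INR 1); exact/leP.
  have P : 0 <= sqrt (INR m) * ((1 + a) * xeb) by apply: Rmult_le_pos => //; apply: sqrt_pos.
  move: P hu; set U := sqrt (INR m) * ((1 + a) * xeb) => P hu; nra.
Qed.
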